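(* Let $n$ be an odd positive integer and $p=\frac{n-1}{2}$. The $\mathrm{SU}(\frac{n+1}{2})\times\mathrm{SU}(\frac{n+1}{2})$-equivariant spectra of the harmonic maps $\psi_1$ and $\psi_{-1}$ are both equal to $\{\lambda_j=4j(j+n+2): j\in\mathbb Z_{\ge0}\}$.
   Context: $\mathbb{CP}^n$ carries the Fubini–Study metric (the metric making $\mathbb S^{2n+1}\to\mathbb{CP}^n$ a Riemannian submersion). $G=\mathrm{SU}(p+1)\times\mathrm{SU}(n-p)$ acts by $(A,B)\cdot[Z]=[\operatorname{diag}(A,B)Z]$; with $\gamma(t)=[\cos t\,e_1+\sin t\,e_{p+2}]$ every point is $g\cdot\gamma(t)$, $g\in G$, $t\in[0,\pi/2]$. For $\rho\ne0$ let $r_\rho(t)=\arctan(\rho\tan t)$ on $[0,\pi/2)$, $r_\rho(\pi/2)=\operatorname{sign}(\rho)\pi/2$, and $\psi_\rho(g\cdot\gamma(t))=g\cdot\gamma(r_\rho(t))$ (so $\psi_1=\mathrm{id}$ and $r_{-1}(t)=-t$). The equivariant spectrum of $\psi_\rho$ is the set of $\lambda\in\mathbb R$ for which \[ \ddot\xi+\big[(2n-2p-1)\cot t-(2p+1)\tan t\big]\dot\xi-\Big[2(n-p-1)\frac{\cos 2r_\rho(t)}{\sin^2t}-2p\frac{\cos2r_\rho(t)}{\cos^2t}+4\frac{\cos4r_\rho(t)}{\sin^22t}\Big]\xi+\lambda\xi=0 \] has a nonzero solution $\xi\in C^\infty_0([0,\tfrac\pi2])$ (smooth, vanishing at $0$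 and $\pi/2$). *)

(* Defs.v *)
From Stdlib Require Import Reals.
From Coquelicot Require Import Coquelicot.
Open Scope R_scope.

Definition sgnR (x : R) : R :=
  if Rlt_dec 0 x then 1 else if Rlt_dec x 0 then -1 else 0.

Definition r_rho (rho t : R) : R :=
  if Rlt_dec t (PI / 2) then atan (rho * tan t) else sgnR rho * (PI / 2).

Definition cotR (t : R) : R := cos t / sin t.

(* smooth function on R (restriction gives a smooth function on [0,pi/2];
   every smooth function on [0,pi/2] has such an extension) *)
Definition smooth (f : R -> R) : Prop := forall k x, ex_derive_n f k x.

Definition jacobi_op (n p : nat) (rho lam : R) (xi : R -> R) (t : R) : R :=
  Derive_n xi 2 t
  + ((2 * INR n - 2 * INR p - 1) * cotR t - (2 * INR p + 1) * tan t) * Derive_n xi 1 t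
  - (2 * (INR n - INR p - 1) * cos (2 * r_rho rho t) / (sin t) ^ 2
     - 2 * INR p * cos (2 * r_rho rho t) / (cos t) ^ 2
     + 4 * cos (4 * r_rho rho t) / (sin (2 * t)) ^ 2) * xi t
  + lam * xi t.

(* lam is in the equivariant spectrum of psi_rho iff the ODE has a nonzero
   solution xi in C^infty_0([0,pi/2]); the ODE is imposed on (0,pi/2),
   where its coefficients are defined. *)
Definition equivariant_spectrum (n p : nat) (rho : R) (lam : R) : Prop :=
  exists xi : R -> R,
    smooth xi /\ xi 0 = 0 /\ xi (PI / 2) = 0 /\
    (exists t, 0 <= t <= PI / 2 /\ xi t <> 0) /\
    (forall t, 0 < t < PI / 2 -> jacobi_op n p rho lam xi t = 0).

(* Main.v *)
Require Import Defs.
From Stdlib Require Import Reals Arith.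
From Coquelicot Require Import Coquelicot.
From Stdlib Require Import Lra Lia Nsatz ZArith Classical.
Open Scope R_scope.


Definition Vt (n p : nat) (t : R) : R :=
  2 * (INR n - INR p - 1) * cos (2 * t) / (sin t) ^ 2
  - 2 * INR p * cos (2 * t) / (cos t) ^ 2
  + 4 * cos (4 * t) / (sin (2 * t)) ^ 2.
Definition Acoef (n p : nat) (t : R) : R :=
  (2 * INR n - 2 * INR p - 1) * cotR t - (2 * INR p + 1) * tan t.
Definition kap (n k : nat) : R := INR k * (INR k + INR n + 2).
Definition psi (k : nat) (t : R) : R := cos t * sin t ^ (2*k+1).
Definition psi1 (k : nat) (t : R) : R :=
  INR (2*k+1) * cos t ^ 2 * sin t ^ (2*k) - sin t ^ (2*k+2).
Definition psi2 (k : nat) (t : R) : R :=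
  INR (2*k+1) * (-2 * cos t * sin t ^ (2*k+1)
     + INR (2*k) * cos t ^ 3 * sin t ^ (Nat.pred (2*k)))
  - INR (2*k+2) * cos t * sin t ^ (2*k+1).
Definition Mpsi (n k : nat) (t : R) : R :=
  -4 * kap n k * psi k t + 2 * INR k * (2 * INR k + INR n + 1) * psi (Nat.pred k) t.

Lemma gen_d1 (m : nat) (t : R) :
  is_derive (fun t => cos t * sin t ^ (m+1)) t
    (INR (m+1) * cos t ^ 2 * sin t ^ m - sin t ^ (m+2)).
Proof.
  auto_derive; auto.
  replace (Nat.pred (m+1)) with m by lia.
  replace (m+2)%nat with (m+1+1)%nat by lia.
  rewrite !pow_add. simpl. ring.
Qed.

Lemma gen_d2 (m : nat) (t : R) :
  is_derive (fun t => INR (m+1) * cos t ^ 2 * sin t ^ m - sin t ^ (m+2)) t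
    (INR (m+1) * (-2 * cos t * sin t ^ (m+1)
     + INR m * cos t ^ 3 * sin t ^ (Nat.pred m))
  - INR (m+2) * cos t * sin t ^ (m+1)).
Proof.
  auto_derive; auto.
  replace (Nat.pred (m+2)) with (m+1)%nat by lia.
  rewrite !pow_add. simpl. ring.
Qed.

Lemma psi_deriv k t : is_derive (psi k) t (psi1 k t).
Proof. unfold psi, psi1. replace (2*k+2)%nat with (2*k+2)%nat by lia. exact (gen_d1 (2*k) t). Qed.

Lemma psi1_deriv k t : is_derive (psi1 k) t (psi2 k t).
Proof. unfold psi1, psi2. exact (gen_d2 (2*k) t). Qed.

Lemma L2 n p k t : n = (2*p+1)%nat -> 0 < t < PI/2 ->
  psi2 k t + Acoef n p t * psi1 k t - Vt n p t * psi k t = Mpsi n k t.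
Proof.
  intros Hn Ht.
  assert (Hs : 0 < sin t) by (apply sin_gt_0; lra).
  assert (Hc : 0 < cos t) by (apply cos_gt_0; lra).
  assert (H1 := sin2_cos2 t).
  unfold Mpsi, kap, psi, psi1, psi2, Vt, Acoef, cotR, tan.
  replace (4 * t) with (2 * (2 * t)) by ring.
  repeat rewrite ?cos_2a, ?sin_2a.
  subst n.
  destruct k as [|k].
  - simpl Nat.pred. replace (2*0+1)%nat with 1%nat by lia.
    replace (2*0+2)%nat with 2%nat by lia. replace (2*0)%nat with 0%nat by lia.
    rewrite ?plus_INR, ?mult_INR. simpl (INR 0). simpl (INR 1). simpl (INR 2).
    generalize (INR p) as P.
    generalize dependent (sin t); generalize dependent (cos t); intros c Hc s Hs H1 P.
    unfold Rsqr in H1.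
    field_simplify_eq; try lra; cbn [pow] in *; nsatz.
  - replace (2 * S k + 1)%nat with ((2*k+1)+2)%nat by lia.
    replace (2 * S k + 2)%nat with ((2*k+1)+3)%nat by lia.
    replace (2 * S k)%nat with ((2*k+1)+1)%nat by lia.
    replace (Nat.pred (2*k+1+1)) with (2*k+1)%nat by lia.
    simpl Nat.pred. rewrite !pow_add.
    rewrite ?plus_INR, ?mult_INR, ?S_INR. simpl (INR 2). simpl (INR 1). simpl (INR 3).
    generalize (sin t ^ (2*k+1)) as X.
    generalize (INR k) as K. generalize (INR p) as P.
    generalize dependent (sin t); generalize dependent (cos t); intros c Hc s Hs H1 P K X.
    unfold Rsqr in H1.
    field_simplify_eq; try lra; cbn [pow] in *; nsatz.
Qed.


Inductive TP : (R -> R) -> Prop :=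
| TP_const c : TP (fun _ => c)
| TP_sin : TP sin
| TP_cos : TP cos
| TP_plus f g : TP f -> TP g -> TP (fun x => f x + g x)
| TP_mult f g : TP f -> TP g -> TP (fun x => f x * g x)
| TP_ext f g : (forall x, f x = g x) -> TP f -> TP g.

Lemma isd_plus f g x df dg : is_derive f x df -> is_derive g x dg ->
  is_derive (fun t => f t + g t) x (df + dg).
Proof. intros H1 H2. exact (is_derive_plus f g x df dg H1 H2). Qed.
Lemma isd_mult f g x df dg : is_derive f x df -> is_derive g x dg ->
  is_derive (fun t => f t * g t) x (df * g x + f x * dg).
Proof. intros H1 H2. apply (is_derive_mult f g x df dg H1 H2). intros; apply Rmult_comm. Qed.

Lemma TP_der f : TP f -> exists g, TP g /\ forall x, is_derive f x (g x).
Proof.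
  induction 1.
  - exists (fun _ => 0). split. constructor. intros x. apply (is_derive_const c x).
  - exists cos. split. constructor. apply is_derive_sin.
  - exists (fun x => (-1) * sin x). split. apply TP_mult; constructor.
    intros x. apply is_derive_ext with (f := cos) ; [reflexivity|].
    replace (-1 * sin x) with (- sin x) by ring. apply is_derive_cos.
  - destruct IHTP1 as [f' [Hf1 Hf2]]. destruct IHTP2 as [g' [Hg1 Hg2]].
    exists (fun x => f' x + g' x). split. apply TP_plus; auto.
    intros x. apply isd_plus; auto.
  - destruct IHTP1 as [f' [Hf1 Hf2]]. destruct IHTP2 as [g' [Hg1 Hg2]].
    exists (fun x => f' x * g x + f x * g' x). split.
    apply TP_plus; apply TP_mult; auto.
    intros x. apply isd_mult; auto.
  - destruct IHTP as [f' [Hf1 Hf2]]. exists f'. split; auto.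
    intros x. apply is_derive_ext with f; auto.
Qed.

Lemma TP_cont f x : TP f -> continuous f x.
Proof.
  intros H. destruct (TP_der f H) as [g [_ Hg]].
  apply (@ex_derive_continuous R_AbsRing R_NormedModule f x). exists (g x). apply Hg.
Qed.

Lemma TP_smooth_aux f : TP f -> forall k, TP (Derive_n f k) /\ forall x, ex_derive_n f k x.
Proof.
  intros Hf k. induction k as [|k IH].
  - split. simpl. apply TP_ext with f; auto. intros; simpl; auto.
  - destruct IH as [IH1 IH2]. destruct (TP_der _ IH1) as [g [Hg1 Hg2]].
    split.
    + apply TP_ext with g; auto. intros x. simpl. symmetry. apply is_derive_unique. apply Hg2.
    + intros x. simpl. exists (g x). apply Hg2.
Qed.

Lemma TP_smooth f : TP f -> smooth f.
Proof. intros Hf k x. apply (TP_smooth_aux f Hf k). Qed.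

Lemma TP_pow f m : TP f -> TP (fun x => f x ^ m).
Proof.
  intros Hf. induction m as [|m IH].
  - simpl. constructor.
  - simpl. apply TP_mult; auto.
Qed.

Lemma TP_sum (F : nat -> R -> R) N : (forall k, TP (F k)) ->
  TP (fun t => sum_f_R0 (fun k => F k t) N).
Proof.
  intros H. induction N as [|N IH].
  - simpl. apply TP_ext with (F 0%nat); auto.
  - simpl. apply TP_plus; auto.
Qed.

Lemma isd_sum (F dF : nat -> R -> R) N t : (forall k, is_derive (F k) t (dF k t)) ->
  is_derive (fun t => sum_f_R0 (fun k => F k t) N) t (sum_f_R0 (fun k => dF k t) N).
Proof.
  intros H. induction N as [|N IH].
  - simpl. apply H.
  - simpl. apply isd_plus; auto.
Qed.


Fixpoint bco (n : nat) (lam : R) (k : nat) : R :=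
  match k with
  | O => 1
  | S k' => - bco n lam k' * (lam - 4 * kap n k') / (2 * (INR k' + 1) * (2 * INR k' + INR n + 3))
  end.

Definition xif (n j : nat) (t : R) : R :=
  sum_f_R0 (fun k => bco n (4 * kap n j) k * psi k t) j.

Lemma TP_psi k : TP (psi k).
Proof. unfold psi. apply TP_mult. constructor. apply TP_pow. constructor. Qed.
Lemma TP_psi1 k : TP (psi1 k).
Proof. unfold psi1. apply TP_ext with (fun t => INR (2*k+1) * cos t ^ 2 * sin t ^ (2*k) + (-1) * sin t ^ (2*k+2)).
  intros; ring.
  apply TP_plus; repeat apply TP_mult; try apply TP_pow; constructor. Qed.
Lemma TP_psi2 k : TP (psi2 k).
Proof. destruct (TP_der _ (TP_psi1 k)) as [g [Hg1 Hg2]].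
  apply TP_ext with g; auto. intros x. apply (is_derive_unique _ _ _ (Hg2 x)) || 
  (pose proof (is_derive_unique _ _ _ (Hg2 x)); pose proof (is_derive_unique _ _ _ (psi1_deriv k x)); congruence).
Qed.

Lemma TP_xif n j : TP (xif n j).
Proof. unfold xif. apply (TP_sum (fun k t => bco n (4 * kap n j) k * psi k t)).
  intros k. apply TP_mult. constructor. apply TP_psi. Qed.

Lemma xif_D1 n j t : Derive_n (xif n j) 1 t = sum_f_R0 (fun k => bco n (4 * kap n j) k * psi1 k t) j.
Proof.
  simpl. apply is_derive_unique. unfold xif.
  apply (isd_sum (fun k t => bco n (4 * kap n j) k * psi k t) (fun k t => bco n (4 * kap n j) k * psi1 k t) j t).
  intros k. apply is_derive_scal. apply psi_deriv.
Qed.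

Lemma xif_D2 n j t : Derive_n (xif n j) 2 t = sum_f_R0 (fun k => bco n (4 * kap n j) k * psi2 k t) j.
Proof.
  simpl. rewrite (Derive_ext _ (fun t => sum_f_R0 (fun k => bco n (4 * kap n j) k * psi1 k t) j)).
  2:{ intros x. apply (xif_D1 n j x). }
  apply is_derive_unique.
  apply (isd_sum (fun k t => bco n (4 * kap n j) k * psi1 k t) (fun k t => bco n (4 * kap n j) k * psi2 k t) j t).
  intros k. apply is_derive_scal. apply psi1_deriv.
Qed.

Lemma sum_lin4 (f g h : nat -> R) a v l N :
  sum_f_R0 f N + a * sum_f_R0 g N - v * sum_f_R0 h N + l * sum_f_R0 h N =
  sum_f_R0 (fun k => f k + a * g k - v * h k + l * h k) N.
Proof. induction N; simpl; [ring|]. rewrite <- IHN. ring. Qed.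

Lemma telescope (T : nat -> R) N : sum_f_R0 (fun k => T k - T (S k)) N = T O - T (S N).
Proof. induction N; simpl; [ring|]. rewrite IHN. ring. Qed.

Lemma forward_ode n p j t : n = (2*p+1)%nat -> 0 < t < PI/2 ->
  Derive_n (xif n j) 2 t + Acoef n p t * Derive_n (xif n j) 1 t
  - Vt n p t * xif n j t + 4 * kap n j * xif n j t = 0.
Proof.
  intros Hn Ht. rewrite xif_D1, xif_D2. unfold xif. rewrite sum_lin4.
  set (lam := 4 * kap n j).
  set (T := fun k => bco n lam k * (2 * INR k * (2 * INR k + INR n + 1)) * psi (Nat.pred k) t).
  rewrite (sum_eq _ (fun k => T k - T (S k))).
  - rewrite telescope. unfold T. simpl bco. unfold lam at 2. simpl INR. 
    replace (4 * kap n j - 4 * kap n j) with 0 by ring. unfold Rdiv. ring.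
  - intros k _.
    transitivity (bco n lam k * (psi2 k t + Acoef n p t * psi1 k t - Vt n p t * psi k t + lam * psi k t)).
    { ring. }
    rewrite (L2 n p k t Hn Ht). unfold T, Mpsi. simpl bco. simpl Nat.pred.
    rewrite S_INR.
    assert (0 <= INR k) by apply pos_INR. assert (0 <= INR n) by apply pos_INR.
    field. split; lra.
Qed.

Lemma sum_zero N : sum_f_R0 (fun _ => 0) N = 0.
Proof. rewrite sum_cte. ring. Qed.

Lemma xif_0 n j : xif n j 0 = 0.
Proof.
  unfold xif. rewrite (sum_eq _ (fun _ => 0)). apply sum_zero.
  intros k _. unfold psi. rewrite sin_0, pow_i by lia. ring.
Qed.

Lemma xif_PI2 n j : xif n j (PI/2) = 0.
Proof.
  unfold xif. rewrite (sum_eq _ (fun _ => 0)). apply sum_zero.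
  intros k _. unfold psi. rewrite cos_PI2. ring.
Qed.

Lemma pow_le_1' x k : 0 <= x <= 1 -> x ^ k <= 1.
Proof.
  intros Hx. induction k; simpl. lra.
  assert (0 <= x ^ k) by (apply pow_le; lra).
  assert (x * x ^ k <= 1 * 1) by (apply Rmult_le_compat; lra). lra.
Qed.

Lemma poly_near (b : nat -> R) j x : 0 <= x <= 1 ->
  Rabs (sum_f_R0 (fun k => b k * x ^ k) j - b O) <= x * sum_f_R0 (fun k => Rabs (b k)) j.
Proof.
  intros Hx. induction j as [|j IH].
  - simpl. replace (b 0%nat * 1 - b 0%nat) with 0 by ring. rewrite Rabs_R0.
    assert (0 <= Rabs (b 0%nat)) by apply Rabs_pos. nra.
  - rewrite !tech5.
    replace (sum_f_R0 (fun k : nat => b k * x ^ k) j + b (S j) * x ^ S j - b 0%nat)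
      with ((sum_f_R0 (fun k : nat => b k * x ^ k) j - b 0%nat) + b (S j) * x ^ S j) by ring.
    eapply Rle_trans. apply Rabs_triang.
    rewrite Rabs_mult. rewrite (Rabs_right (x ^ S j)) by (apply Rle_ge, pow_le; lra).
    assert (x ^ S j <= x). { simpl. assert (x ^ j <= 1) by (apply pow_le_1'; lra).
      assert (x * x ^ j <= x * 1) by (apply Rmult_le_compat_l; lra). lra. }
    assert (0 <= Rabs (b (S j))) by apply Rabs_pos.
    assert (Rabs (b (S j)) * x ^ S j <= Rabs (b (S j)) * x) by (apply Rmult_le_compat_l; lra).
    lra.
Qed.

Lemma sum_abs_pos (b : nat -> R) j : 0 <= sum_f_R0 (fun k => Rabs (b k)) j.
Proof. induction j; simpl. apply Rabs_pos. assert (0 <= Rabs (b (S j))) by apply Rabs_pos. lra. Qed.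

Lemma psi_eq k t : psi k t = cos t * sin t * (sin t ^ 2) ^ k.
Proof. unfold psi. rewrite pow_add, pow_mult. ring. Qed.

Lemma psi_sum (b : nat -> R) j t :
  sum_f_R0 (fun k => b k * psi k t) j = cos t * sin t * sum_f_R0 (fun k => b k * (sin t ^ 2) ^ k) j.
Proof. induction j as [|j IH]. - simpl sum_f_R0. rewrite psi_eq. ring. - rewrite !tech5, IH, psi_eq. ring. Qed.

Lemma xif_nonzero n j : exists t, 0 <= t <= PI/2 /\ xif n j t <> 0.
Proof.
  set (b := bco n (4 * kap n j)).
  set (B := sum_f_R0 (fun k => Rabs (b k)) j).
  assert (HB : 0 <= B) by apply sum_abs_pos.
  set (a := / (2 * B + 2)).
  assert (Ha0 : 0 < a) by (apply Rinv_0_lt_compat; lra).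
  assert (Ha1 : a <= 1/2).
  { unfold a. apply Rmult_le_reg_l with (2*B+2). lra. rewrite Rinv_r by lra. lra. }
  assert (HaB : a * B < 1/2).
  { unfold a. apply Rmult_lt_reg_l with (2*B+2). lra.
    rewrite <- Rmult_assoc, Rinv_r by lra. lra. }
  assert (HPI := PI2_3_2).
  exists a. split. lra.
  assert (Hs0 : 0 < sin a) by (apply sin_gt_0; lra).
  assert (Hs1 : sin a < a) by (apply sin_lt_x; lra).
  assert (Hc : 0 < cos a) by (apply cos_gt_0; lra).
  assert (Hx : 0 <= sin a ^ 2 <= sin a). { split. apply pow_le; lra. simpl. nra. }
  assert (Hp := poly_near b j (sin a ^ 2) ltac:(lra)).
  fold B in Hp. simpl b in Hp. unfold b in Hp. simpl bco in Hp.
  assert (Hq : sum_f_R0 (fun k => b k * (sin a ^ 2) ^ k) j > 0).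
  { unfold b. apply Rabs_def2 in Hp || idtac.
    assert (sin a ^ 2 * B <= a * B) by (apply Rmult_le_compat_r; lra).
    destruct (Rabs_def2 _ _ (Rle_lt_trans _ _ _ Hp (Rle_lt_trans _ _ _ H HaB))) as [H1 H2].
    lra. }
  assert (Heq : xif n j a = cos a * sin a * sum_f_R0 (fun k => b k * (sin a ^ 2) ^ k) j).
  { unfold xif. fold b. apply psi_sum. }
  rewrite Heq. apply Rgt_not_eq.
  apply Rmult_gt_0_compat; [apply Rmult_gt_0_compat|]; lra.
Qed.


Lemma r_rho_cos rho t : (rho = 1 \/ rho = -1) -> 0 < t < PI/2 ->
  cos (2 * r_rho rho t) = cos (2 * t) /\ cos (4 * r_rho rho t) = cos (4 * t).
Proof.
  intros Hr Ht. unfold r_rho. destruct (Rlt_dec t (PI/2)) as [_|H]; [|lra].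
  assert (Htt : atan (tan t) = t) by (apply atan_tan; lra).
  destruct Hr as [-> | ->].
  - rewrite Rmult_1_l, Htt. auto.
  - replace (-1 * tan t) with (- tan t) by ring. rewrite atan_opp, Htt.
    replace (2 * - t) with (- (2 * t)) by ring. replace (4 * - t) with (- (4 * t)) by ring.
    rewrite !cos_neg. auto.
Qed.

Lemma jac_eq n p rho lam xi t : (rho = 1 \/ rho = -1) -> 0 < t < PI/2 ->
  jacobi_op n p rho lam xi t =
  Derive_n xi 2 t + Acoef n p t * Derive_n xi 1 t - Vt n p t * xi t + lam * xi t.
Proof.
  intros Hr Ht. destruct (r_rho_cos rho t Hr Ht) as [H1 H2].
  unfold jacobi_op, Vt, Acoef. rewrite H1, H2. reflexivity.
Qed.

Lemma sm_deriv f k x : smooth f -> is_derive (Derive_n f k) x (Derive_n f (S k) x).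
Proof.
  intros Hf. pose proof (Hf (S k) x) as H. simpl in H.
  apply Derive_correct in H. exact H.
Qed.

Lemma sm_cont (f : R -> R) (k : nat) (x : R) : smooth f -> continuous (Derive_n f k) x.
Proof.
  intros Hf. apply (@ex_derive_continuous R_AbsRing R_NormedModule).
  exists (Derive_n f (S k) x). apply sm_deriv; auto.
Qed.

Lemma cont_mult (f g : R -> R) (x : R) : continuous f x -> continuous g x -> continuous (fun t => f t * g t) x.
Proof. intros; apply (continuous_mult f g x); auto. Qed.
Lemma cont_plus (f g : R -> R) (x : R) : continuous f x -> continuous g x -> continuous (fun t => f t + g t) x.
Proof. intros; apply (continuous_plus f g x); auto. Qed.
Lemma cont_minus (f g : R -> R) (x : R) : continuous f x -> continuous g x -> continuous (fun t => f t - g t) x.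
Proof. intros; apply (continuous_minus f g x); auto. Qed.
Lemma isd_minus (f g : R -> R) (x df dg : R) : is_derive f x df -> is_derive g x dg ->
  is_derive (fun t => f t - g t) x (df - dg).
Proof. intros H1 H2. exact (is_derive_minus f g x df dg H1 H2). Qed.

Definition om (n : nat) (t : R) : R := (sin t * cos t) ^ n.
Definition dom (n : nat) (t : R) : R :=
  INR n * (sin t * cos t) ^ (Nat.pred n) * (cos t ^ 2 - sin t ^ 2).

Lemma om_deriv n t : is_derive (om n) t (dom n t).
Proof. unfold om, dom. auto_derive; auto. ring. Qed.

Lemma TP_om n : TP (om n).
Proof. unfold om. apply TP_pow. apply TP_mult; constructor. Qed.
Lemma TP_dom n : TP (dom n).
Proof. unfold dom. apply TP_ext with (fun t => INR n * (sin t * cos t) ^ (Nat.pred n) * (cos t ^ 2 + (-1) * sin t ^ 2)).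
  intros; ring.
  repeat apply TP_mult; try apply TP_plus; try apply TP_mult; try apply TP_pow; try apply TP_mult; constructor. Qed.

Lemma dom_eq n p t : n = (2*p+1)%nat -> 0 < t < PI/2 -> dom n t = om n t * Acoef n p t.
Proof.
  intros Hn Ht.
  assert (Hs : 0 < sin t) by (apply sin_gt_0; lra).
  assert (Hc : 0 < cos t) by (apply cos_gt_0; lra).
  unfold dom, om, Acoef, cotR, tan. subst n.
  replace (Nat.pred (2*p+1)) with (2*p)%nat by lia.
  rewrite pow_add. rewrite plus_INR, mult_INR. simpl (INR 2); simpl (INR 1).
  field. lra.
Qed.

Section Converse.
Variables (n p : nat) (lam : R) (xi : R -> R).
Hypothesis Hn : n = (2*p+1)%nat.
Hypothesis Hsm : smooth xi.
Hypothesis Hode : forall t, 0 < t < PI/2 ->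
  Derive_n xi 2 t + Acoef n p t * Derive_n xi 1 t - Vt n p t * xi t + lam * xi t = 0.

Let D1 := Derive_n xi 1.
Let D2 := Derive_n xi 2.

Lemma xi_cont x : continuous xi x.
Proof. apply (continuous_ext (Derive_n xi 0)). reflexivity. apply sm_cont; auto. Qed.
Lemma xi_der x : is_derive xi x (D1 x).
Proof. apply is_derive_ext with (Derive_n xi 0). reflexivity. apply sm_deriv; auto. Qed.
Lemma D1_der x : is_derive D1 x (D2 x).
Proof. apply sm_deriv; auto. Qed.

Definition Ff k t := om n t * (D1 t * psi k t - psi1 k t * xi t).
Definition Gf k t := dom n t * (D1 t * psi k t - psi1 k t * xi t)
                    + om n t * (D2 t * psi k t - psi2 k t * xi t).

Lemma Ff_der k t : is_derive (Ff k) t (Gf k t).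
Proof.
  unfold Ff.
  assert (H := isd_mult _ _ t _ _ (om_deriv n t)
     (isd_minus _ _ t _ _ (isd_mult _ _ t _ _ (D1_der t) (psi_deriv k t))
                         (isd_mult _ _ t _ _ (psi1_deriv k t) (xi_der t)))).
  replace (Gf k t) with
   (dom n t * (D1 t * psi k t - psi1 k t * xi t) +
    om n t * (D2 t * psi k t + D1 t * psi1 k t - (psi2 k t * xi t + psi1 k t * D1 t))).
  exact H. unfold Gf. ring.
Qed.

Lemma Gf_cont k t : continuous (Gf k) t.
Proof.
  unfold Gf.
  assert (HD1 : continuous D1 t) by (apply sm_cont; auto).
  assert (HD2 : continuous D2 t) by (apply sm_cont; auto).
  assert (Hxi := xi_cont t).
  assert (H1 := TP_cont _ t (TP_om n)). assert (H2 := TP_cont _ t (TP_dom n)).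
  assert (H3 := TP_cont _ t (TP_psi k)). assert (H4 := TP_cont _ t (TP_psi1 k)).
  assert (H5 := TP_cont _ t (TP_psi2 k)).
  apply cont_plus; apply cont_mult; auto; apply cont_minus; apply cont_mult; auto.
Qed.


Lemma om_0 : om n 0 = 0.
Proof. unfold om. rewrite sin_0, Rmult_0_l. apply pow_i. lia. Qed.
Lemma om_PI2 : om n (PI/2) = 0.
Proof. unfold om. rewrite cos_PI2, Rmult_0_r. apply pow_i. lia. Qed.

Lemma RInt_Gf k : RInt (Gf k) 0 (PI/2) = 0.
Proof.
  assert (H := is_RInt_derive (Ff k) (Gf k) 0 (PI/2) (fun x _ => Ff_der k x) (fun x _ => Gf_cont k x)).
  apply is_RInt_unique in H. rewrite H.
  unfold Ff. rewrite om_0, om_PI2. unfold minus, plus, opp; simpl; ring.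
Qed.

Definition ck (k : nat) : R := 2 * INR k * (2 * INR k + INR n + 1).

Lemma Gf_eq k t : 0 < t < PI/2 -> Gf k t =
  - ((lam - 4 * kap n k) * (om n t * xi t * psi k t) + ck k * (om n t * xi t * psi (Nat.pred k) t)).
Proof.
  intros Ht. unfold Gf. rewrite (dom_eq n p t Hn Ht).
  assert (H1 := Hode t Ht). assert (H2 := L2 n p k t Hn Ht).
  unfold Mpsi in H2. fold D1 D2 in H1.
  replace (D2 t) with (- Acoef n p t * D1 t + Vt n p t * xi t - lam * xi t) by lra.
  replace (psi2 k t) with (-4 * kap n k * psi k t + ck k * psi (Nat.pred k) t
      - Acoef n p t * psi1 k t + Vt n p t * psi k t) by (unfold ck; lra).
  ring.
Qed.

Definition Jk (k : nat) : R := RInt (fun t => om n t * xi t * psi k t) 0 (PI/2).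

Lemma ex_RInt_J k : ex_RInt (fun t => om n t * xi t * psi k t) 0 (PI/2).
Proof.
  apply (@ex_RInt_continuous R_CompleteNormedModule). intros z _.
  apply cont_mult. apply cont_mult. apply TP_cont, TP_om. apply xi_cont. apply TP_cont, TP_psi.
Qed.

Lemma RInt_lin2 (f g : R -> R) a b u v : ex_RInt f a b -> ex_RInt g a b ->
  RInt (fun t => - (u * f t + v * g t)) a b = - (u * RInt f a b + v * RInt g a b).
Proof.
  intros Hf Hg. apply (@is_RInt_unique R_CompleteNormedModule).
  apply (@is_RInt_opp R_CompleteNormedModule (fun t => u * f t + v * g t) a b (u * RInt f a b + v * RInt g a b)).
  apply (@is_RInt_plus R_CompleteNormedModule (fun t => u * f t) (fun t => v * g t)).
  apply (@is_RInt_scal R_CompleteNormedModule f a b u). apply (@RInt_correct R_CompleteNormedModule); auto.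
  apply (@is_RInt_scal R_CompleteNormedModule g a b v). apply (@RInt_correct R_CompleteNormedModule); auto.
Qed.

Lemma J_rel k : (lam - 4 * kap n k) * Jk k + ck k * Jk (Nat.pred k) = 0.
Proof.
  assert (H := RInt_Gf k).
  rewrite (RInt_ext _ (fun t => - ((lam - 4 * kap n k) * (om n t * xi t * psi k t)
       + ck k * (om n t * xi t * psi (Nat.pred k) t)))) in H.
  2:{ intros x Hx. assert (HP := PI2_RGT_0). rewrite Rmin_left in Hx by lra. rewrite Rmax_right in Hx by lra.
      apply Gf_eq; auto. }
  rewrite RInt_lin2 in H by apply ex_RInt_J. unfold Jk. lra.
Qed.

Lemma J_zero : (forall k, lam <> 4 * kap n k) -> forall k, Jk k = 0.
Proof.
  intros Hl k. induction k as [|k IH].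
  - assert (H := J_rel 0). unfold ck in H. simpl Nat.pred in H. simpl INR in H.
    assert (lam - 4 * kap n 0 <> 0) by (intro; apply (Hl 0%nat); lra).
    apply Rmult_eq_reg_l with (lam - 4 * kap n 0); auto. lra.
  - assert (H := J_rel (S k)). simpl Nat.pred in H. rewrite IH in H.
    assert (lam - 4 * kap n (S k) <> 0) by (intro; apply (Hl (S k)); lra).
    apply Rmult_eq_reg_l with (lam - 4 * kap n (S k)); auto. lra.
Qed.

End Converse.


Fixpoint bern (m i : nat) (x : R) : R :=
  match m with
  | O => match i with O => 1 | S _ => 0 end
  | S m' => (1 - x) * bern m' i x + match i with O => 0 | S i' => x * bern m' i' x end
  end.

Lemma bern_ge0 m i x : 0 <= x <= 1 -> 0 <= bern m i x.
Proof.
  intros Hx. revert i. induction m as [|m IH]; intros i; simpl.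
  - destruct i; lra.
  - assert (0 <= (1 - x) * bern m i x) by (apply Rmult_le_pos; [lra|apply IH]).
    destruct i. lra. assert (0 <= x * bern m i x) by (apply Rmult_le_pos; [lra|apply IH]). lra.
Qed.

Lemma bern_big m i x : (m < i)%nat -> bern m i x = 0.
Proof.
  revert i. induction m as [|m IH]; intros i Hi; simpl.
  - destruct i. lia. reflexivity.
  - destruct i. lia. rewrite !IH by lia. ring.
Qed.

Lemma sum_scal_l (f : nat -> R) c N : sum_f_R0 (fun i => c * f i) N = c * sum_f_R0 f N.
Proof. induction N; simpl; [ring|]. rewrite IHN. ring. Qed.

Lemma sum_shift (g : nat -> R) m x :
  sum_f_R0 (fun i => g i * bern (S m) i x) (S m) =
  sum_f_R0 (fun i => ((1 - x) * g i + x * g (S i)) * bern m i x) m.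
Proof.
  rewrite decomp_sum by lia. simpl Nat.pred.
  rewrite (sum_eq (fun i => g (S i) * bern (S m) (S i) x)
     (fun i => (1 - x) * (g (S i) * bern m (S i) x) + x * (g (S i) * bern m i x))).
  2:{ intros i _. simpl. ring. }
  rewrite sum_plus, !sum_scal_l.
  rewrite (sum_eq (fun i => ((1 - x) * g i + x * g (S i)) * bern m i x)
     (fun i => (1 - x) * (g i * bern m i x) + x * (g (S i) * bern m i x))).
  2:{ intros i _. ring. }
  rewrite sum_plus, !sum_scal_l.
  assert (E : sum_f_R0 (fun i => g i * bern m i x) (S m) = sum_f_R0 (fun i => g i * bern m i x) m).
  { rewrite tech5. rewrite (bern_big m (S m)) by lia. ring. }
  rewrite <- E. rewrite (decomp_sum _ (S m)) by lia. simpl Nat.pred.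
  simpl bern. ring.
Qed.

Lemma sum_ext_m (f g : nat -> R) N : (forall i, (i <= N)%nat -> f i = g i) -> sum_f_R0 f N = sum_f_R0 g N.
Proof. apply sum_eq. Qed.

Lemma bern_M0 m x : sum_f_R0 (fun i => bern m i x) m = 1.
Proof.
  induction m as [|m IH]. simpl. reflexivity.
  transitivity (sum_f_R0 (fun i => 1 * bern (S m) i x) (S m)).
  { apply sum_eq; intros; ring. }
  rewrite sum_shift. transitivity (sum_f_R0 (fun i => bern m i x) m); [apply sum_eq; intros; ring | exact IH].
Qed.

Lemma bern_M1 m x : sum_f_R0 (fun i => INR i * bern m i x) m = INR m * x.
Proof.
  induction m as [|m IH]. simpl. ring.
  rewrite sum_shift.
  rewrite (sum_eq _ (fun i => INR i * bern m i x + x * bern m i x)).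
  2:{ intros i _. rewrite S_INR. ring. }
  rewrite sum_plus, IH, sum_scal_l, bern_M0, S_INR. ring.
Qed.

Lemma bern_M2 m x : sum_f_R0 (fun i => INR i ^ 2 * bern m i x) m = INR m * x * (1 - x) + INR m ^ 2 * x ^ 2.
Proof.
  induction m as [|m IH]. simpl. ring.
  rewrite sum_shift.
  rewrite (sum_eq _ (fun i => INR i ^ 2 * bern m i x + (2 * x) * (INR i * bern m i x) + x * bern m i x)).
  2:{ intros i _. rewrite S_INR. ring. }
  rewrite !sum_plus, IH, !sum_scal_l, bern_M0, bern_M1, S_INR. ring.
Qed.

Lemma bern_var m x : (0 < m)%nat ->
  sum_f_R0 (fun i => (x - INR i / INR m) ^ 2 * bern m i x) m = x * (1 - x) / INR m.
Proof.
  intros Hm. assert (0 < INR m) by (apply lt_0_INR; lia).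
  rewrite (sum_eq _ (fun i => x ^ 2 * bern m i x + (- 2 * x / INR m) * (INR i * bern m i x)
       + (/ INR m ^ 2) * (INR i ^ 2 * bern m i x))).
  2:{ intros i _. field. lra. }
  rewrite !sum_plus, !sum_scal_l, bern_M0, bern_M1, bern_M2.
  field. lra.
Qed.

Lemma TP_bern m i : TP (fun t => bern m i (sin t ^ 2)).
Proof.
  revert i. induction m as [|m IH]; intros i.
  - destruct i; simpl; apply TP_const.
  - destruct i.
    + apply TP_ext with (fun t => (1 + (-1) * sin t ^ 2) * bern m 0 (sin t ^ 2) + 0).
      intros; simpl; ring.
      apply TP_plus; [|apply TP_const]. apply TP_mult; auto.
      apply TP_plus. apply TP_const. apply TP_mult. apply TP_const. apply TP_pow. constructor.
    + apply TP_ext with (fun t => (1 + (-1) * sin t ^ 2) * bern m (S i) (sin t ^ 2) + sin t ^ 2 * bern m i (sin t ^ 2)).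
      intros; simpl; ring.
      apply TP_plus; apply TP_mult; auto.
      apply TP_plus. apply TP_const. apply TP_mult. apply TP_const. apply TP_pow. constructor.
      apply TP_pow. constructor.
Qed.

Definition RV := R_CompleteNormedModule.

Lemma ex_RInt_cont (f : R -> R) a b : (forall x, continuous f x) -> ex_RInt f a b.
Proof. intros H. apply (@ex_RInt_continuous RV). intros; apply H. Qed.

Lemma RInt_lin3 (f g h : R -> R) a b : ex_RInt f a b -> ex_RInt g a b -> ex_RInt h a b ->
  RInt (fun t => f t - g t + h t) a b = RInt f a b - RInt g a b + RInt h a b.
Proof.
  intros Hf Hg Hh. apply (@is_RInt_unique RV).
  apply (@is_RInt_plus RV (fun t => f t - g t) h).
  apply (@is_RInt_minus RV f g). apply (@RInt_correct RV); auto. apply (@RInt_correct RV); auto.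
  apply (@RInt_correct RV); auto.
Qed.

Lemma RInt_sub (f g : R -> R) a b : ex_RInt f a b -> ex_RInt g a b ->
  RInt (fun t => f t - g t) a b = RInt f a b - RInt g a b.
Proof.
  intros Hf Hg. apply (@is_RInt_unique RV).
  apply (@is_RInt_minus RV f g). apply (@RInt_correct RV); auto. apply (@RInt_correct RV); auto.
Qed.

Lemma RInt_sc (f : R -> R) a b c : ex_RInt f a b ->
  RInt (fun t => c * f t) a b = c * RInt f a b.
Proof.
  intros Hf. apply (@is_RInt_unique RV).
  apply (@is_RInt_scal RV f a b c). apply (@RInt_correct RV); auto.
Qed.

Lemma RInt_sum (F : nat -> R -> R) N a b : (forall i, ex_RInt (F i) a b) ->
  RInt (fun t => sum_f_R0 (fun i => F i t) N) a b = sum_f_R0 (fun i => RInt (F i) a b) N.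
Proof.
  intros H. apply (@is_RInt_unique RV). induction N as [|N IH].
  - simpl. apply (@RInt_correct RV). apply H.
  - simpl. apply (@is_RInt_plus RV (fun t => sum_f_R0 (fun i => F i t) N) (F (S N))). auto.
    apply (@RInt_correct RV). apply H.
Qed.

Ltac rring := match goal with |- @eq _ ?a ?b => change (@eq R a b) end; ring.

Section Density.
Variables W g : R -> R.
Hypothesis HW : forall x, continuous W x.
Hypothesis HJ : forall k, RInt (fun t => W t * (sin t ^ 2) ^ k) 0 (PI/2) = 0.

Lemma cont_Wub a m i x : continuous (fun t => W t * (sin t ^ 2) ^ a * bern m i (sin t ^ 2)) x.
Proof.
  apply cont_mult. apply cont_mult. auto.
  apply TP_cont. apply TP_pow. apply TP_pow. constructor.
  apply TP_cont. apply TP_bern.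
Qed.

Lemma bern_int m : forall i a, RInt (fun t => W t * (sin t ^ 2) ^ a * bern m i (sin t ^ 2)) 0 (PI/2) = 0.
Proof.
  induction m as [|m IH]; intros i a.
  - destruct i; simpl bern.
    + transitivity (RInt (fun t => W t * (sin t ^ 2) ^ a) 0 (PI/2)). apply RInt_ext. intros. rring. apply HJ.
    + rewrite (RInt_ext _ (fun _ => 0)). rewrite RInt_const. unfold scal; simpl; unfold mult; simpl; ring.
      intros; rring.
  - destruct i.
    + rewrite (RInt_ext _ (fun t => W t * (sin t ^ 2) ^ a * bern m 0 (sin t ^ 2)
                            - W t * (sin t ^ 2) ^ (S a) * bern m 0 (sin t ^ 2))).
      2:{ intros x _. cbn [bern]. rewrite <- (tech_pow_Rmult (sin x ^ 2) a). rring. }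
      rewrite RInt_sub by (apply ex_RInt_cont; intros; apply cont_Wub).
      rewrite !IH. rring.
    + rewrite (RInt_ext _ (fun t => W t * (sin t ^ 2) ^ a * bern m (S i) (sin t ^ 2)
                            - W t * (sin t ^ 2) ^ (S a) * bern m (S i) (sin t ^ 2)
                            + W t * (sin t ^ 2) ^ (S a) * bern m i (sin t ^ 2))).
      2:{ intros x _. cbn [bern]. rewrite <- (tech_pow_Rmult (sin x ^ 2) a). rring. }
      rewrite RInt_lin3 by (apply ex_RInt_cont; intros; apply cont_Wub).
      rewrite !IH. rring.
Qed.

End Density.


Lemma nat_unbounded (r : R) : exists m : nat, r < INR m.
Proof.
  destruct (archimed (Rabs r)) as [H1 _].
  assert (Hr := Rabs_pos r).
  assert (Hz : (0 <= up (Rabs r))%Z) by (apply le_IZR; lra).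
  exists (Z.to_nat (up (Rabs r))).
  rewrite INR_IZR_INZ, Z2Nat.id by auto.
  assert (r <= Rabs r) by apply RRle_abs. lra.
Qed.

Lemma sin_sq_diff a b : sin a ^ 2 - sin b ^ 2 = sin (a + b) * sin (a - b).
Proof.
  rewrite sin_plus, sin_minus.
  assert (H1 := sin2_cos2 a). assert (H2 := sin2_cos2 b). unfold Rsqr in *.
  generalize dependent (sin a). generalize dependent (sin b).
  generalize dependent (cos a). generalize dependent (cos b). intros.
  cbn [pow]. nsatz.
Qed.

Lemma sin_sq_sep t s e : 0 <= t <= PI/2 -> 0 <= s <= PI/2 -> 0 < e <= PI/2 ->
  e <= Rabs (t - s) -> sin e ^ 2 <= Rabs (sin t ^ 2 - sin s ^ 2).
Proof.
  assert (HP := PI2_RGT_0).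
  assert (Hgen : forall t s, 0 <= t <= PI/2 -> 0 <= s <= PI/2 -> 0 < e <= PI/2 ->
     e <= t - s -> sin e ^ 2 <= sin t ^ 2 - sin s ^ 2).
  { clear t s. intros t s Ht Hs He Hd.
    rewrite sin_sq_diff.
    assert (He0 : 0 <= sin e) by (apply sin_ge_0; lra).
    assert (H1 : sin e <= sin (t - s)) by (apply sin_incr_1; lra).
    assert (H2 : sin e <= sin (t + s)).
    { destruct (Rle_dec (t + s) (PI/2)).
      - apply sin_incr_1; lra.
      - rewrite <- (sin_PI_x (t + s)). apply sin_incr_1; lra. }
    simpl. rewrite Rmult_1_r. apply Rmult_le_compat; lra. }
  intros Ht Hs He Hd.
  assert (Hse2 : 0 <= sin e ^ 2) by (apply pow2_ge_0).
  destruct (Rle_dec s t).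
  - rewrite Rabs_right in Hd by lra.
    assert (H := Hgen t s Ht Hs He Hd).
    rewrite Rabs_right; lra.
  - rewrite Rabs_left in Hd by lra.
    assert (H := Hgen s t Hs Ht He ltac:(lra)).
    rewrite Rabs_left1. lra.
    assert (0 <= sin e ^ 2) by (apply pow2_ge_0). lra.
Qed.

Lemma dist_bound t s e : 0 <= t <= PI/2 -> 0 <= s <= PI/2 -> 0 < e <= PI/2 ->
  Rabs (t - s) <= e + (PI/2) / sin e ^ 4 * (sin t ^ 2 - sin s ^ 2) ^ 2.
Proof.
  intros Ht Hs He.
  assert (HP := PI2_RGT_0).
  assert (Hse : 0 < sin e) by (apply sin_gt_0; lra).
  assert (Hse4 : 0 < sin e ^ 4) by (apply pow_lt; lra).
  assert (Hq : 0 <= (PI/2) / sin e ^ 4 * (sin t ^ 2 - sin s ^ 2) ^ 2).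
  { apply Rmult_le_pos. apply Rlt_le, Rdiv_lt_0_compat; lra. apply pow2_ge_0. }
  destruct (Rlt_dec (Rabs (t - s)) e). lra.
  assert (H := sin_sq_sep t s e Ht Hs He ltac:(lra)).
  assert (H2 : sin e ^ 4 <= (sin t ^ 2 - sin s ^ 2) ^ 2).
  { replace (sin e ^ 4) with (sin e ^ 2 * sin e ^ 2) by ring.
    replace ((sin t ^ 2 - sin s ^ 2) ^ 2) with (Rabs (sin t ^ 2 - sin s ^ 2) * Rabs (sin t ^ 2 - sin s ^ 2)).
    apply Rmult_le_compat; try apply pow2_ge_0; lra.
    rewrite <- Rabs_mult. rewrite Rabs_right. ring. apply Rle_ge. replace ((sin t ^ 2 - sin s ^ 2) * (sin t ^ 2 - sin s ^ 2)) with ((sin t ^ 2 - sin s ^ 2) ^ 2) by ring. apply pow2_ge_0. }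
  assert (H3 : PI/2 <= (PI/2) / sin e ^ 4 * (sin t ^ 2 - sin s ^ 2) ^ 2).
  { unfold Rdiv. rewrite Rmult_assoc. rewrite <- (Rmult_1_r (PI/2)) at 1.
    apply Rmult_le_compat_l. lra.
    apply Rmult_le_reg_l with (sin e ^ 4). auto. rewrite <- Rmult_assoc, Rinv_r by lra. lra. }
  assert (Rabs (t - s) <= PI/2). { apply Rabs_le. lra. }
  lra.
Qed.

Definition tau (m i : nat) : R := asin (sqrt (INR i / INR m)).

Lemma tau_props m i : (0 < m)%nat -> (i <= m)%nat ->
  0 <= tau m i <= PI/2 /\ sin (tau m i) ^ 2 = INR i / INR m.
Proof.
  intros Hm Hi.
  assert (Hm0 : 0 < INR m) by (apply lt_0_INR; lia).
  assert (Hi0 : 0 <= INR i) by apply pos_INR.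
  assert (Him : INR i <= INR m) by (apply le_INR; lia).
  assert (Hq : 0 <= INR i / INR m <= 1).
  { split. apply Rmult_le_pos; auto. apply Rlt_le, Rinv_0_lt_compat; auto.
    apply Rmult_le_reg_l with (INR m); auto. field_simplify; lra. }
  assert (Hy0 : 0 <= sqrt (INR i / INR m)) by apply sqrt_pos.
  assert (Hy1 : sqrt (INR i / INR m) <= 1).
  { rewrite <- sqrt_1. apply sqrt_le_1_alt. lra. }
  assert (Hs : sin (tau m i) = sqrt (INR i / INR m)) by (apply sin_asin; lra).
  split.
  - split; [|apply asin_bound].
    destruct (Rle_dec 0 (tau m i)) as [|Hn]; auto.
    assert (sin (tau m i) < 0). { apply sin_lt_0_var. assert (H := asin_bound (sqrt (INR i / INR m))).
      unfold tau in *. assert (HP := PI2_RGT_0). lra. lra. }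
    lra.
  - rewrite Hs. simpl. rewrite Rmult_1_r. apply sqrt_sqrt. lra.
Qed.




Section Approx.
Variables (W g : R -> R) (L : R).
Hypothesis HW : forall x, continuous W x.
Hypothesis HJ : forall k, RInt (fun t => W t * (sin t ^ 2) ^ k) 0 (PI/2) = 0.
Hypothesis Hg : forall x, continuous g x.
Hypothesis HL0 : 0 <= L.
Hypothesis HL : forall t s, 0 <= t <= PI/2 -> 0 <= s <= PI/2 -> Rabs (g t - g s) <= L * Rabs (t - s).

Definition Am m t := sum_f_R0 (fun i => g (tau m i) * bern m i (sin t ^ 2)) m.

Lemma TP_Am m : TP (Am m).
Proof. unfold Am. apply (TP_sum (fun i t => g (tau m i) * bern m i (sin t ^ 2))).
  intros i. apply TP_mult. apply TP_const. apply TP_bern. Qed.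

Lemma approx m e t : (0 < m)%nat -> 0 < e <= PI/2 -> 0 <= t <= PI/2 ->
  Rabs (g t - Am m t) <= L * e + L * ((PI/2) / sin e ^ 4) / (4 * INR m).
Proof.
  intros Hm He Ht.
  assert (Hm0 : 0 < INR m) by (apply lt_0_INR; lia).
  assert (HP := PI2_RGT_0).
  assert (Hse : 0 < sin e) by (apply sin_gt_0; lra).
  assert (Hse4 : 0 < sin e ^ 4) by (apply pow_lt; lra).
  set (C := (PI/2) / sin e ^ 4).
  assert (HC : 0 <= C) by (apply Rlt_le, Rdiv_lt_0_compat; lra).
  set (x := sin t ^ 2).
  assert (Hx : 0 <= x <= 1).
  { unfold x. assert (H := sin2_cos2 t). unfold Rsqr in H. split. apply pow2_ge_0.
    assert (0 <= cos t * cos t) by nra. simpl. lra. }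
  assert (E1 : g t - Am m t = sum_f_R0 (fun i => (g t - g (tau m i)) * bern m i x) m).
  { unfold Am. fold x.
    transitivity (g t * sum_f_R0 (fun i => bern m i x) m - sum_f_R0 (fun i => g (tau m i) * bern m i x) m).
    rewrite bern_M0. ring.
    rewrite <- sum_scal_l, <- minus_sum. apply sum_eq. intros; ring. }
  rewrite E1.
  eapply Rle_trans. apply sum_f_R0_triangle.
  eapply Rle_trans. apply (sum_Rle _ (fun i => L * e * bern m i x + (L * C) * ((x - INR i / INR m) ^ 2 * bern m i x))).
  { intros i Hi. destruct (tau_props m i Hm Hi) as [Htau Hsin].
    assert (Hb := bern_ge0 m i x Hx).
    rewrite Rabs_mult, (Rabs_right (bern m i x)) by lra.
    assert (H1 := HL t (tau m i) Ht Htau).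
    assert (H2 := dist_bound t (tau m i) e Ht Htau He).
    fold C in H2. rewrite Hsin in H2. fold x in H2.
    assert (H3 : Rabs (g t - g (tau m i)) <= L * (e + C * (x - INR i / INR m) ^ 2)).
    { eapply Rle_trans. apply H1. apply Rmult_le_compat_l; auto. }
    assert (H4 := Rmult_le_compat_r _ _ _ Hb H3). eapply Rle_trans; [apply H4|]. right; ring. }
  rewrite sum_plus, !sum_scal_l, bern_M0, bern_var by auto.
  assert (Hxx : x * (1 - x) <= 1/4) by (assert (0 <= (x - 1/2)^2) by apply pow2_ge_0; nra).
  assert (L * C * (x * (1 - x) / INR m) <= L * C / (4 * INR m)).
  { unfold Rdiv. rewrite Rinv_mult. 
    assert (0 <= L * C) by (apply Rmult_le_pos; auto).
    assert (0 < / INR m) by (apply Rinv_0_lt_compat; auto).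
    assert (x * (1 - x) * / INR m <= / 4 * / INR m) by (apply Rmult_le_compat_r; lra).
    replace (L * C * (x * (1 - x) * / INR m)) with ((L * C) * (x * (1 - x) * / INR m)) by ring.
    replace (L * C * (/ 4 * / INR m)) with ((L * C) * (/ 4 * / INR m)) by ring.
    apply Rmult_le_compat_l; auto. }
  unfold C in *. lra.
Qed.


Lemma cont_absW x : continuous (fun t => Rabs (W t)) x.
Proof. apply (continuous_comp W Rabs). auto. apply continuous_Rabs. Qed.

Lemma RInt_WA m : RInt (fun t => W t * Am m t) 0 (PI/2) = 0.
Proof.
  rewrite (RInt_ext _ (fun t => sum_f_R0 (fun i => g (tau m i) * (W t * (sin t ^ 2) ^ 0 * bern m i (sin t ^ 2))) m)).
  2:{ intros x _. unfold Am. rewrite <- sum_scal_l. apply sum_eq. intros; simpl; ring. }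
  rewrite RInt_sum.
  - rewrite (sum_eq _ (fun _ => 0)). apply sum_zero.
    intros i _. rewrite RInt_sc. rewrite (bern_int W HW HJ m i 0). ring.
    apply ex_RInt_cont. intros; apply cont_Wub; auto.
  - intros i. apply ex_RInt_cont. intros x. apply cont_mult. apply continuous_const.
    apply cont_Wub; auto.
Qed.

Lemma int_bound m e : (0 < m)%nat -> 0 < e <= PI/2 ->
  Rabs (RInt (fun t => W t * g t) 0 (PI/2)) <=
  (L * e + L * ((PI/2) / sin e ^ 4) / (4 * INR m)) * RInt (fun t => Rabs (W t)) 0 (PI/2).
Proof.
  intros Hm He. assert (HP := PI2_RGT_0).
  set (K := L * e + L * ((PI/2) / sin e ^ 4) / (4 * INR m)).
  assert (Hc1 : forall x, continuous (fun t => W t * g t) x) by (intros; apply cont_mult; auto).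
  assert (Hc2 : forall x, continuous (fun t => W t * Am m t) x)
    by (intros; apply cont_mult; auto; apply TP_cont, TP_Am).
  assert (E : RInt (fun t => W t * g t) 0 (PI/2) = RInt (fun t => W t * g t - W t * Am m t) 0 (PI/2)).
  { rewrite RInt_sub. rewrite RInt_WA. rewrite Rminus_0_r. reflexivity. apply ex_RInt_cont; auto. apply ex_RInt_cont; auto. }
  rewrite E.
  eapply Rle_trans. apply abs_RInt_le. lra. apply ex_RInt_cont. intros; apply cont_minus; auto.
  rewrite <- RInt_sc by (apply ex_RInt_cont; apply cont_absW).
  apply RInt_le. lra.
  apply ex_RInt_cont. intros x. apply (continuous_comp (fun t => W t * g t - W t * Am m t) Rabs).
  apply cont_minus; auto. apply continuous_Rabs.
  apply ex_RInt_cont. intros x. apply cont_mult. apply continuous_const. apply cont_absW.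
  intros x Hx.
  replace (W x * g x - W x * Am m x) with (W x * (g x - Am m x)) by ring.
  rewrite Rabs_mult. rewrite Rmult_comm.
  apply Rmult_le_compat_r. apply Rabs_pos.
  apply approx; auto. lra.
Qed.

Lemma W_g_zero : RInt (fun t => W t * g t) 0 (PI/2) = 0.
Proof.
  assert (HP := PI2_RGT_0).
  set (I := (RInt (fun t => W t * g t) 0 (PI/2) : R)).
  set (IW := (RInt (fun t => Rabs (W t)) 0 (PI/2) : R)).
  assert (HIW : 0 <= IW).
  { apply RInt_ge_0. lra. apply ex_RInt_cont, cont_absW. intros; apply Rabs_pos. }
  destruct (Req_dec I 0) as [|HI]; auto. exfalso.
  assert (HI0 : 0 < Rabs I) by (apply Rabs_pos_lt; auto).
  set (eps := Rabs I / 2).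
  assert (Heps : 0 < eps) by (unfold eps; lra).
  set (A := IW * L).
  assert (HA : 0 <= A) by (apply Rmult_le_pos; auto).
  set (e := Rmin (PI/2) (eps / (2 * (A + 1)))).
  assert (He0 : 0 < e). { unfold e. apply Rmin_pos. lra. apply Rdiv_lt_0_compat; lra. }
  assert (He1 : e <= PI/2) by apply Rmin_l.
  assert (He2 : e <= eps / (2 * (A + 1))) by apply Rmin_r.
  assert (HAe : A * e <= eps / 2).
  { apply Rle_trans with (A * (eps / (2 * (A + 1)))). apply Rmult_le_compat_l; auto.
    apply Rmult_le_reg_l with (2 * (A + 1)). lra.
    field_simplify; [|lra]. nra. }
  assert (Hse : 0 < sin e) by (apply sin_gt_0; lra).
  assert (Hse4 : 0 < sin e ^ 4) by (apply pow_lt; lra).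
  set (C := (PI/2) / sin e ^ 4).
  assert (HC : 0 <= C) by (apply Rlt_le, Rdiv_lt_0_compat; lra).
  set (Q := A * C).
  assert (HQ : 0 <= Q) by (apply Rmult_le_pos; auto).
  destruct (nat_unbounded (Q / (2 * eps))) as [m0 Hm0].
  set (m := S m0).
  assert (Hm : (0 < m)%nat) by (unfold m; lia).
  assert (Hm1 : 0 < INR m) by (apply lt_0_INR; lia).
  assert (Hm2 : INR m0 <= INR m) by (apply le_INR; unfold m; lia).
  assert (HQm : Q / (4 * INR m) <= eps / 2).
  { apply Rmult_le_reg_l with (4 * INR m). lra.
    field_simplify; [|lra].
    assert (Q / (2 * eps) < INR m) by lra.
    assert (Q < INR m * (2 * eps)).
    { apply Rmult_lt_reg_r with (/ (2 * eps)). apply Rinv_0_lt_compat; lra.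
      rewrite Rmult_assoc, Rinv_r by lra. lra. }
    lra. }
  assert (H := int_bound m e Hm (conj He0 He1)). fold I IW C in H.
  assert (Hr : (L * e + L * C / (4 * INR m)) * IW = A * e + Q / (4 * INR m)).
  { unfold Q, A. field. lra. }
  rewrite Hr in H. unfold eps in *. lra.
Qed.

End Approx.




Lemma cont_pt (f : R -> R) x : continuous f x -> continuity_pt f x.
Proof. intros H. apply continuity_pt_filterlim. exact H. Qed.

Lemma lipschitz (xi : R -> R) : smooth xi -> exists L, 0 <= L /\
  forall t s, 0 <= t <= PI/2 -> 0 <= s <= PI/2 -> Rabs (xi t - xi s) <= L * Rabs (t - s).
Proof.
  intros Hsm. assert (HP := PI2_RGT_0).
  assert (Hc : forall x, continuous xi x).
  { intros x. apply (continuous_ext (Derive_n xi 0)). reflexivity. apply sm_cont; auto. }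
  assert (Hd : forall x, is_derive xi x (Derive_n xi 1 x)).
  { intros x. apply is_derive_ext with (Derive_n xi 0). reflexivity. apply sm_deriv; auto. }
  destruct (continuity_ab_maj (fun x => Rabs (Derive_n xi 1 x)) 0 (PI/2)) as [Mx [HM HMx]].
  lra.
  { intros c _. apply cont_pt. apply (continuous_comp (Derive_n xi 1) Rabs). apply sm_cont; auto.
    apply continuous_Rabs. }
  exists (Rabs (Derive_n xi 1 Mx)). split. apply Rabs_pos.
  intros t s Ht Hs.
  destruct (MVT_gen xi s t (Derive_n xi 1)) as [c [Hc1 Hc2]].
  - intros; apply Hd.
  - intros; apply cont_pt; apply Hc.
  - rewrite Hc2, Rabs_mult.
    apply Rmult_le_compat_r. apply Rabs_pos.
    apply HM. split.
    + eapply Rle_trans; [|apply Hc1]. apply Rmin_glb; lra.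
    + eapply Rle_trans; [apply Hc1|]. apply Rmax_lub; lra.
Qed.

Lemma RInt_pos_zero (f : R -> R) a b t : a < t < b -> (forall x, continuous f x) ->
  (forall x, a < x < b -> 0 <= f x) -> RInt f a b = 0 -> f t = 0.
Proof.
  intros Ht Hc Hpos HI.
  destruct (Req_dec (f t) 0) as [|Hne]; auto. exfalso.
  assert (Hft : 0 < f t) by (assert (H := Hpos t Ht); lra).
  assert (Hct := cont_pt f t (Hc t)).
  destruct (Hct (f t / 2) ltac:(lra)) as [alp [Halp Hx]].
  set (d := Rmin alp (Rmin (t - a) (b - t)) / 2).
  assert (Hd0 : 0 < d). { unfold d. apply Rmult_lt_0_compat; [|lra].
    apply Rmin_pos; auto. apply Rmin_pos; lra. }
  assert (Hd1 : d < alp). { unfold d. assert (H := Rmin_l alp (Rmin (t - a) (b - t))). lra. }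
  assert (Hd2 : d < t - a). { unfold d. assert (H := Rmin_r alp (Rmin (t - a) (b - t))).
     assert (H' := Rmin_l (t - a) (b - t)). lra. }
  assert (Hd3 : d < b - t). { unfold d. assert (H := Rmin_r alp (Rmin (t - a) (b - t))).
     assert (H' := Rmin_r (t - a) (b - t)). lra. }
  assert (Hex : forall u v, ex_RInt f u v) by (intros; apply ex_RInt_cont; auto).
  assert (E : RInt f a b = RInt f a (t - d) + RInt f (t - d) (t + d) + RInt f (t + d) b).
  { rewrite <- (RInt_Chasles f a (t - d) b) by auto.
    rewrite <- (RInt_Chasles f (t - d) (t + d) b) by auto.
    unfold plus; simpl. ring. }
  assert (H1 : 0 <= RInt f a (t - d)).
  { apply RInt_ge_0. lra. auto. intros; apply Hpos; lra. }
  assert (H3 : 0 <= RInt f (t + d) b).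
  { apply RInt_ge_0. lra. auto. intros; apply Hpos; lra. }
  assert (H2 : RInt (fun _ => f t / 2) (t - d) (t + d) <= RInt f (t - d) (t + d)).
  { apply RInt_le. lra. apply ex_RInt_const. auto.
    intros x Hxr. destruct (Req_dec x t) as [->|Hxt]. lra.
    assert (Hdist : R_dist x t < alp) by (unfold R_dist; apply Rabs_def1; lra).
    assert (HD : D_x no_cond t x) by (split; [exact I | auto]).
    assert (H := Hx x (conj HD Hdist)).
    unfold R_dist in H. apply Rabs_def2 in H. lra. }
  rewrite RInt_const in H2. unfold scal in H2; simpl in H2. unfold mult in H2; simpl in H2.
  assert (0 < (t + d - (t - d)) * (f t / 2)) by (apply Rmult_lt_0_compat; lra).
  lra.
Qed.

Lemma converse n p lam xi : n = (2*p+1)%nat -> smooth xi ->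
  (forall t, 0 < t < PI/2 ->
     Derive_n xi 2 t + Acoef n p t * Derive_n xi 1 t - Vt n p t * xi t + lam * xi t = 0) ->
  (forall k, lam <> 4 * kap n k) ->
  forall t, 0 < t < PI/2 -> xi t = 0.
Proof.
  intros Hn Hsm Hode Hl t Ht.
  assert (HP := PI2_RGT_0).
  set (W := fun t => om n t * xi t * cos t * sin t).
  assert (HW : forall x, continuous W x).
  { intros x. unfold W. apply cont_mult; [apply cont_mult; [apply cont_mult|]|].
    apply TP_cont, TP_om. apply xi_cont; auto. apply TP_cont; constructor. apply TP_cont; constructor. }
  assert (HJ : forall k, RInt (fun t => W t * (sin t ^ 2) ^ k) 0 (PI/2) = 0).
  { intros k. transitivity (Jk n xi k); [|apply (J_zero n p lam xi Hn Hsm Hode Hl k)]. unfold Jk.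
    apply RInt_ext. intros x _. unfold W. rewrite psi_eq. rring. }
  destruct (lipschitz xi Hsm) as [L [HL0 HL]].
  assert (H0 := W_g_zero W xi L HW HJ (xi_cont xi Hsm) HL0 HL).
  assert (Hz := RInt_pos_zero (fun t => W t * xi t) 0 (PI/2) t Ht).
  assert (Hs : 0 < sin t) by (apply sin_gt_0; lra).
  assert (Hc : 0 < cos t) by (apply cos_gt_0; lra).
  assert (Ho : 0 < om n t) by (unfold om; apply pow_lt; nra).
  assert (E : W t * xi t = 0).
  { apply Hz; auto.
    - intros x. apply cont_mult; auto. apply xi_cont; auto.
    - intros x Hx. unfold W.
      assert (0 < sin x) by (apply sin_gt_0; lra).
      assert (0 < cos x) by (apply cos_gt_0; lra).
      assert (0 < om n x) by (unfold om; apply pow_lt; nra).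
      replace (om n x * xi x * cos x * sin x * xi x) with ((om n x * cos x * sin x) * (xi x * xi x)) by ring.
      apply Rmult_le_pos. apply Rlt_le. repeat apply Rmult_lt_0_compat; auto.
      apply Rle_0_sqr. }
  unfold W in E.
  replace (om n t * xi t * cos t * sin t * xi t) with ((om n t * cos t * sin t) * (xi t * xi t)) in E by ring.
  apply Rmult_integral in E. destruct E as [E|E].
  - exfalso. assert (0 < om n t * cos t * sin t) by (repeat apply Rmult_lt_0_compat; auto). lra.
  - apply Rmult_integral in E. destruct E; auto.
Qed.

Lemma spectrum_rho n p rho lam : n = (2*p+1)%nat -> (rho = 1 \/ rho = -1) ->
  (equivariant_spectrum n p rho lam <->
     exists j : nat, lam = 4 * INR j * (INR j + INR n + 2)).
Proof.
  intros Hn Hr. split.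
  - intros [xi [Hsm [H0 [H1 [[t0 [Ht0 Hne]] Hode]]]]].
    destruct (classic (exists j : nat, lam = 4 * INR j * (INR j + INR n + 2))) as [|Hno]; auto.
    exfalso.
    assert (Hl : forall k, lam <> 4 * kap n k).
    { intros k Hk. apply Hno. exists k. rewrite Hk. unfold kap. ring. }
    assert (Hode' : forall t, 0 < t < PI/2 ->
       Derive_n xi 2 t + Acoef n p t * Derive_n xi 1 t - Vt n p t * xi t + lam * xi t = 0).
    { intros t Ht. rewrite <- (jac_eq n p rho lam xi t Hr Ht). auto. }
    assert (Hz := converse n p lam xi Hn Hsm Hode' Hl).
    apply Hne.
    destruct (Req_dec t0 0) as [->|]; auto.
    destruct (Req_dec t0 (PI/2)) as [->|]; auto.
    apply Hz. lra.
  - intros [j Hj].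
    exists (xif n j). split; [|split; [|split; [|split]]].
    + apply TP_smooth, TP_xif.
    + apply xif_0.
    + apply xif_PI2.
    + apply xif_nonzero.
    + intros t Ht. rewrite (jac_eq n p rho lam (xif n j) t Hr Ht).
      replace lam with (4 * kap n j) by (rewrite Hj; unfold kap; ring).
      apply forward_ode; auto.
Qed.

Theorem theoremD (n : nat) (Hpos : (0 < n)%nat) (Hodd : Nat.Odd n) :
  let p := ((n - 1) / 2)%nat in
  (forall lam : R, equivariant_spectrum n p 1 lam <->
     exists j : nat, lam = 4 * INR j * (INR j + INR n + 2)) /\
  (forall lam : R, equivariant_spectrum n p (-1) lam <->
     exists j : nat, lam = 4 * INR j * (INR j + INR n + 2)).
Proof.
  intros p.
  assert (Hn : n = (2*p+1)%nat).
  { destruct Hodd as [m Hm]. unfold p. subst n.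
    replace (2 * m + 1 - 1)%nat with (m * 2)%nat by lia.
    rewrite Nat.div_mul by lia. lia. }
  split; intros lam; apply spectrum_rho; auto.
Qed.
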